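(* Let $N\geq 1$ be an integer. Then for all $0<x<\pi/2$, \[ 2+\sum_{k=1}^{N-1}\frac{k\cdot 2^{2k+3}|B_{2k+2}|}{(2k+2)!}x^{2k+2}+p_N x^{2N+1}\tan x<\left(\frac{x}{\sin x}\right)^2+\frac{x}{\tan x}<2+\sum_{k=1}^{N-1}\frac{k\cdot 2^{2k+3}|B_{2k+2}|}{(2k+2)!}x^{2k+2}+q_N x^{2N+1}\tan x, \] with the best possible constants $p_N=0$ and $q_N=\dfrac{N\cdot 2^{2N+3}|B_{2N+2}|}{(2N+2)!}$.
   Context: The Bernoulli numbers $B_n$ are defined by $\frac{t}{e^t-1}=\sum_{n=0}^\infty B_n\frac{t^n}{n!}$ for $|t|<2\pi$. An empty sum is understood to be zero. *)

(* Defs.v *)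
From Stdlib Require Import Arith Reals Lra Lia.
Open Scope R_scope.

(* The generating-function definition of the Bernoulli numbers:
   t/(e^t-1) = sum_{n>=0} B_n t^n/n!  for 0<|t|<2*pi
   (t = 0 is excluded since the left side is defined there only by continuity;
   this still determines B uniquely). *)
Definition is_Bernoulli (B : nat -> R) : Prop :=
  forall t : R, 0 < Rabs t < 2 * PI ->
    infinite_sum (fun n => B n * t ^ n / INR (fact n)) (t / (exp t - 1)).

Fixpoint sumR (f : nat -> R) (n : nat) : R :=
  match n with
  | O => 0
  | S m => sumR f m + f m
  end.

Definition coef (B : nat -> R) (k : nat) : R :=
  INR k * 2 ^ (2 * k + 3)%nat * Rabs (B (2 * k + 2)%nat) / INR (fact (2 * k + 2)%nat).

Definition approx8 (B : nat -> R) (N : nat) (c x : R) : R :=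
  2 + sumR (fun j => coef B (S j) * x ^ (2 * S j + 2)%nat) (N - 1)%nat
    + c * x ^ (2 * N + 1)%nat * tan x.

Definition middle (x : R) : R := (x / sin x) ^ 2 + x / tan x.

(* Main.v *)
Require Import Defs.
From Stdlib Require Import Arith Reals Lra Lia Psatz.
From Coquelicot Require Import Coquelicot.
Open Scope R_scope.


Lemma bounded_lim0 (u : nat -> R) : is_lim_seq u 0 -> exists M, forall n, Rabs (u n) <= M.
Proof.
  intros H.
  apply is_lim_seq_spec in H.
  destruct (H (mkposreal 1 Rlt_0_1)) as [N HN]. simpl in HN.
  exists (1 + sum_f_R0 (fun k => Rabs (u k)) N).
  assert (Hpos : forall m, 0 <= sum_f_R0 (fun k => Rabs (u k)) m).
  { intros m; apply cond_pos_sum; intros; apply Rabs_pos. }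
  intros n. destruct (le_lt_dec N n) as [Hn|Hn].
  - specialize (HN n Hn). rewrite Rminus_0_r in HN. specialize (Hpos N). lra.
  - assert (forall m, (n <= m)%nat -> Rabs (u n) <= sum_f_R0 (fun k => Rabs (u k)) m).
    { induction m; intros Hm.
      - inversion Hm. simpl. lra.
      - inversion Hm.
        + subst. rewrite tech5. specialize (Hpos m). lra.
        + rewrite tech5. specialize (IHm H1). pose proof (Rabs_pos (u (S m))). lra. }
    specialize (H0 N ltac:(lia)). lra.
Qed.

Lemma radius_ge (a : nat -> R) (r : R) :
  (forall x, 0 < x < r -> ex_pseries a x) ->
  forall x, Rabs x < r -> Rbar_lt (Rabs x) (CV_radius a).
Proof.
  intros Hex x Hx.
  set (y := (Rabs x + r) / 2).
  assert (Hy : 0 < y < r) by (pose proof (Rabs_pos x); unfold y; lra).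
  specialize (Hex y Hy).
  apply ex_pseries_R in Hex. apply ex_series_lim_0 in Hex.
  destruct (bounded_lim0 _ Hex) as [M HM].
  pose proof (CV_radius_bounded a) as [Hub _].
  assert (Hle : Rbar_le y (CV_radius a)).
  { apply Hub. exists M. exact HM. }
  destruct (CV_radius a) as [c| |]; simpl in *; try easy.
  unfold y in *; lra.
Qed.

Lemma PSeries_cont0 (a : nat -> R) (e : R) :
  0 < e -> Rbar_lt 0 (CV_radius a) ->
  (forall x, 0 < Rabs x < e -> PSeries a x = 0) -> PSeries a 0 = 0.
Proof.
  intros He Hr H.
  assert (Hc : continuity_pt (PSeries a) 0).
  { apply PSeries_continuity. rewrite Rabs_R0. exact Hr. }
  apply Rabs_eq_0. apply Rle_antisym; [|apply Rabs_pos].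
  apply le_epsilon. intros eps Heps.
  destruct (Hc eps Heps) as [alp [Halp Hd]].
  set (x := Rmin alp e / 2).
  assert (Hx0 : 0 < x) by (unfold x; pose proof (Rmin_glb_lt alp e 0 Halp He); lra).
  assert (Hxa : x < alp) by (unfold x; pose proof (Rmin_l alp e); lra).
  assert (Hxe : x < e) by (unfold x; pose proof (Rmin_r alp e); lra).
  specialize (Hd x). simpl in Hd. unfold R_dist in Hd.
  rewrite H in Hd.
  - rewrite Rplus_0_l. rewrite Rminus_0_l, Rabs_Ropp in Hd. apply Rlt_le. apply Hd.
    split; [split; [exact I| lra]|]. rewrite Rminus_0_r, Rabs_pos_eq; lra.
  - rewrite Rabs_pos_eq; lra.
Qed.

Lemma PSeries_ident (a : nat -> R) (e : R) :
  0 < e -> (forall x, Rabs x < e -> ex_pseries a x) ->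
  (forall x, 0 < Rabs x < e -> PSeries a x = 0) -> forall n, a n = 0.
Proof.
  intros He Hex H n.
  assert (Hr : forall x, Rabs x < e -> Rbar_lt (Rabs x) (CV_radius a)).
  { apply radius_ge. intros x Hx. apply Hex. rewrite Rabs_pos_eq; lra. }
  assert (Hr0 : Rbar_lt 0 (CV_radius a)).
  { rewrite <- Rabs_R0. apply Hr. rewrite Rabs_R0. exact He. }
  assert (H0 := PSeries_cont0 a e He Hr0 H).
  apply (PSeries_ext_recip a (fun _ => 0) n Hr0).
  - rewrite CV_radius_const_0. simpl. exact I.
  - exists (mkposreal e He). intros y Hy. rewrite PSeries_const_0.
    destruct (Req_dec y 0) as [->|Hy0]; [exact H0|].
    apply H. split; [apply Rabs_pos_lt; exact Hy0|].
    unfold ball in Hy; simpl in Hy. unfold AbsRing_ball, abs, minus, plus, opp in Hy; simpl in Hy.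
    rewrite Ropp_0, Rplus_0_r in Hy. exact Hy.
Qed.


Definition beta (B : nat -> R) (n : nat) : R := B n / INR (fact n).

Lemma exp_ne1 (t : R) : t <> 0 -> exp t - 1 <> 0.
Proof.
  intros Ht. destruct (Rtotal_order t 0) as [H|[H|H]]; [|easy|].
  - pose proof (exp_increasing t 0 H). rewrite exp_0 in H0. lra.
  - pose proof (exp_ineq1 t Ht). lra.
Qed.

Lemma ps_beta (B : nat -> R) (HB : is_Bernoulli B) (t : R) :
  0 < Rabs t < 2 * PI -> is_pseries (beta B) t (t / (exp t - 1)).
Proof.
  intros Ht. specialize (HB t Ht). apply is_series_Reals in HB.
  unfold is_pseries. eapply is_series_ext; [|exact HB].
  intros n. rewrite pow_n_pow.
  change (B n * t ^ n / INR (fact n) = t^n * beta B n). unfold beta. field. apply INR_fact_neq_0.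
Qed.

Lemma rad_beta (B : nat -> R) (HB : is_Bernoulli B) (t : R) :
  Rabs t < 2 * PI -> Rbar_lt (Rabs t) (CV_radius (beta B)).
Proof.
  apply radius_ge. intros x Hx. eexists. apply ps_beta; auto.
  rewrite Rabs_pos_eq; lra.
Qed.

Lemma f_beta (B : nat -> R) (HB : is_Bernoulli B) (t : R) :
  0 < Rabs t < 2 * PI -> PSeries (beta B) t = t / (exp t - 1).
Proof.
  intros Ht. apply is_pseries_unique. apply ps_beta; auto.
Qed.

Lemma exp_small (t : R) : 0 < t < 1 -> 1 - t <= t / (exp t - 1) <= 1.
Proof.
  intros Ht.
  pose proof (exp_ineq1 t ltac:(lra)) as H1.
  pose proof (exp_ineq1 (-t) ltac:(lra)) as H2.
  rewrite exp_Ropp in H2.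
  pose proof (exp_pos t) as Hp.
  assert (Hd : 0 < exp t - 1) by lra.
  split.
  - apply Rmult_le_reg_r with (exp t - 1); auto.
    unfold Rdiv. rewrite Rmult_assoc, Rinv_l by lra.
    assert (1 - t < / exp t) by lra.
    assert (exp t * (1 - t) < 1).
    { apply Rmult_lt_reg_r with (/ exp t). apply Rinv_0_lt_compat; auto.
      rewrite Rmult_comm, <- Rmult_assoc, Rinv_l by lra. lra. }
    nra.
  - apply Rmult_le_reg_r with (exp t - 1); auto.
    unfold Rdiv. rewrite Rmult_assoc, Rinv_l by lra. lra.
Qed.

Lemma beta0 (B : nat -> R) (HB : is_Bernoulli B) : beta B 0 = 1.
Proof.
  assert (Hr : Rbar_lt 0 (CV_radius (beta B))).
  { rewrite <- Rabs_R0. apply rad_beta; auto. rewrite Rabs_R0. pose proof PI_RGT_0. lra. }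
  assert (Hc : continuity_pt (PSeries (beta B)) 0).
  { apply PSeries_continuity. rewrite Rabs_R0. exact Hr. }
  rewrite <- (PSeries_0 (beta B)).
  apply Rabs_eq_0 in Hr || idtac.
  apply Rminus_diag_uniq. apply Rabs_eq_0. apply Rle_antisym; [|apply Rabs_pos].
  apply le_epsilon. intros eps Heps.
  destruct (Hc (eps/2) ltac:(lra)) as [alp [Halp Hd]].
  set (x := Rmin (Rmin alp eps) (1/2) / 2).
  assert (Hm1 := Rmin_l (Rmin alp eps) (1/2)).
  assert (Hm2 := Rmin_r (Rmin alp eps) (1/2)).
  assert (Hm3 := Rmin_l alp eps).
  assert (Hm4 := Rmin_r alp eps).
  assert (Hx0 : 0 < x).
  { unfold x. pose proof (Rmin_glb_lt alp eps 0 Halp Heps).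
    pose proof (Rmin_glb_lt (Rmin alp eps) (1/2) 0 H ltac:(lra)). lra. }
  assert (Hxa : x < alp) by (unfold x; lra).
  assert (Hxe : x <= eps/2) by (unfold x; lra).
  assert (Hx1 : x < 1) by (unfold x; lra).
  specialize (Hd x). simpl in Hd. unfold R_dist in Hd.
  assert (Hd' : Rabs (PSeries (beta B) x - PSeries (beta B) 0) < eps/2).
  { apply Hd. split; [split; [exact I| lra]|]. rewrite Rminus_0_r, Rabs_pos_eq; lra. }
  rewrite (f_beta B HB) in Hd' by (rewrite Rabs_pos_eq; pose proof PI2_3_2 ; lra).
  pose proof (exp_small x ltac:(lra)).
  rewrite Rplus_0_l.
  apply Rabs_def2 in Hd'. apply Rabs_le. lra.
Qed.


Definition e0 (n : nat) : R := match n with O => 1 | _ => 0 end.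
Definition e1 : nat -> R := PS_incr_1 e0.

Lemma ex_zero (x : R) : ex_pseries (fun _ : nat => 0) x.
Proof.
  apply CV_radius_inside. rewrite CV_radius_const_0. exact I.
Qed.

Lemma ex_e0 (x : R) : ex_pseries e0 x.
Proof.
  unfold ex_pseries. apply ex_series_incr_1.
  eapply ex_series_ext; [|apply (ex_zero x)].
  intros n. simpl. unfold scal. simpl. unfold mult. simpl. ring.
Qed.

Lemma PS_e0 (x : R) : PSeries e0 x = 1.
Proof.
  rewrite PSeries_decr_1 by apply ex_e0.
  simpl. rewrite (PSeries_ext _ (fun _ => 0)) by (intros; reflexivity).
  rewrite PSeries_const_0. ring.
Qed.

Lemma ex_e1 (x : R) : ex_pseries e1 x.
Proof. apply ex_pseries_incr_1, ex_e0. Qed.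

Lemma PS_e1 (x : R) : PSeries e1 x = x.
Proof. unfold e1. rewrite PSeries_incr_1, PS_e0. ring. Qed.

Lemma pow_neg (t : R) (n : nat) : (- t) ^ n = (-1) ^ n * t ^ n.
Proof. induction n; simpl; [ring|rewrite IHn; ring]. Qed.

Lemma PS_neg (a : nat -> R) (t : R) :
  PSeries (fun n => (-1) ^ n * a n) t = PSeries a (- t).
Proof.
  unfold PSeries. apply Series_ext. intros n. rewrite pow_neg. ring.
Qed.

Lemma ex_neg (a : nat -> R) (t : R) :
  ex_pseries a (- t) -> ex_pseries (fun n => (-1) ^ n * a n) t.
Proof.
  unfold ex_pseries. apply ex_series_ext. intros n. rewrite !pow_n_pow, pow_neg.
  change ((-1) ^ n * t ^ n * a n = t ^ n * ((-1) ^ n * a n)). ring.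
Qed.

Lemma beta_even (B : nat -> R) (HB : is_Bernoulli B) (n : nat) :
  (-1) ^ n * beta B n - beta B n - e1 n = 0.
Proof.
  assert (Hpi := PI_RGT_0).
  assert (Hex : forall x, Rabs x < 2 * PI -> ex_pseries (beta B) x).
  { intros x Hx. apply CV_radius_inside. apply rad_beta; auto. }
  assert (K : forall n, PS_minus (PS_minus (fun n => (-1) ^ n * beta B n) (beta B)) e1 n = 0).
  2: { specialize (K n). unfold PS_minus, plus, opp in K; simpl in K. unfold plus in K; simpl in K. lra. }
  apply (PSeries_ident _ (2 * PI)); [lra| |].
  - intros x Hx. apply ex_pseries_minus; [apply ex_pseries_minus|apply ex_e1].
    + apply ex_neg. apply Hex. rewrite Rabs_Ropp. exact Hx.
    + apply Hex; exact Hx.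
  - intros t Ht.
    rewrite (PSeries_minus _ _ t).
    2: { apply ex_pseries_minus; [apply ex_neg, Hex; rewrite Rabs_Ropp; lra|apply Hex; lra]. }
    2: apply ex_e1.
    rewrite (PSeries_minus _ _ t).
    2: { apply ex_neg, Hex; rewrite Rabs_Ropp; lra. }
    2: { apply Hex; lra. }
    rewrite PS_neg, PS_e1.
    rewrite (f_beta B HB) by (rewrite Rabs_Ropp; exact Ht).
    rewrite (f_beta B HB) by exact Ht.
    assert (Ht0 : t <> 0) by (intros ->; rewrite Rabs_R0 in Ht; lra).
    pose proof (exp_ne1 t Ht0).
    assert (- t <> 0) by lra.
    pose proof (exp_ne1 (-t) H0).
    rewrite exp_Ropp in *. pose proof (exp_pos t).
    field_simplify; [unfold Rdiv; ring|repeat split; lra].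
Qed.

Lemma beta1 (B : nat -> R) (HB : is_Bernoulli B) : beta B 1 = - 1 / 2.
Proof.
  pose proof (beta_even B HB 1) as H. simpl in H. unfold e1 in H. simpl in H. lra.
Qed.

Lemma beta_odd (B : nat -> R) (HB : is_Bernoulli B) (j : nat) : beta B (2 * j + 3) = 0.
Proof.
  pose proof (beta_even B HB (2 * j + 3)) as H.
  replace (2 * j + 3)%nat with (S (2 * (S j))) in * by lia.
  rewrite pow_1_odd in H. unfold e1 in H. simpl PS_incr_1 in H.
  replace (e0 (2 * S j)) with 0 in H by (simpl; reflexivity). lra.
Qed.


Lemma deriv_g (t : R) : t <> 0 ->
  is_derive (fun s => s / (exp s - 1)) t ((exp t - 1 - t * exp t) / (exp t - 1) ^ 2).
Proof.
  intros Ht. pose proof (exp_ne1 t Ht).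
  auto_derive; [exact H|]. field. exact H.
Qed.

Definition Dc (a : nat -> R) (n : nat) : R := INR n * a n.

Lemma Dc_incr (a : nat -> R) (n : nat) : Dc a n = PS_incr_1 (PS_derive a) n.
Proof. destruct n; unfold Dc, PS_derive; simpl; [apply Rmult_0_l|reflexivity]. Qed.

Lemma PS_Dc (a : nat -> R) (x : R) : PSeries (Dc a) x = x * PSeries (PS_derive a) x.
Proof. rewrite (PSeries_ext _ _ x (Dc_incr a)). apply PSeries_incr_1. Qed.

Lemma ex_Dc (a : nat -> R) (x : R) : Rbar_lt (Rabs x) (CV_radius a) -> ex_pseries (Dc a) x.
Proof.
  intros H. eapply ex_pseries_ext. intros n; symmetry; apply Dc_incr.
  apply ex_pseries_incr_1, ex_pseries_derive, H.
Qed.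

Lemma beta_ode (B : nat -> R) (HB : is_Bernoulli B) (n : nat) :
  INR n * beta B n - beta B n + PS_mult (beta B) (beta B) n + PS_incr_1 (beta B) n = 0.
Proof.
  assert (Hpi := PI_RGT_0).
  set (b := beta B).
  assert (Hr : forall x, Rabs x < 2 * PI -> Rbar_lt (Rabs x) (CV_radius b)).
  { intros x Hx. apply rad_beta; auto. }
  assert (Hex : forall x, Rabs x < 2 * PI -> ex_pseries b x).
  { intros x Hx. apply CV_radius_inside. apply Hr, Hx. }
  assert (K : forall n, PS_plus (PS_plus (PS_minus (Dc b) b) (PS_mult b b)) (PS_incr_1 b) n = 0).
  2: { specialize (K n). unfold PS_plus, PS_minus, plus, opp in K; simpl in K.
       unfold plus in K; simpl in K. unfold Dc in K. lra. }
  assert (Hexs : forall x, Rabs x < 2 * PI ->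
     ex_pseries (PS_minus (Dc b) b) x /\ ex_pseries (PS_mult b b) x /\ ex_pseries (PS_incr_1 b) x).
  { intros x Hx. split; [|split].
    - apply ex_pseries_minus; [apply ex_Dc, Hr, Hx|apply Hex, Hx].
    - apply ex_pseries_mult; apply Hr, Hx.
    - apply ex_pseries_incr_1, Hex, Hx. }
  apply (PSeries_ident _ (2 * PI)); [lra| |].
  - intros x Hx. destruct (Hexs x Hx) as (H1 & H2 & H3).
    apply ex_pseries_plus; [apply ex_pseries_plus|]; auto.
  - intros t Ht.
    assert (Ht2 : Rabs t < 2 * PI) by lra.
    destruct (Hexs t Ht2) as (H1 & H2 & H3).
    rewrite PSeries_plus by (try apply ex_pseries_plus; auto).
    rewrite PSeries_plus by auto.
    rewrite PSeries_minus by (try apply ex_Dc; auto).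
    rewrite PSeries_mult by auto.
    rewrite PSeries_incr_1, PS_Dc.
    assert (Ht0 : t <> 0) by (intros ->; rewrite Rabs_R0 in Ht; lra).
    assert (Hd : PSeries (PS_derive b) t = (exp t - 1 - t * exp t) / (exp t - 1) ^ 2).
    { assert (D1 := is_derive_PSeries b t (Hr t Ht2)).
      assert (Hloc : locally t (fun s => PSeries b s = s / (exp s - 1))).
      { assert (Hd : 0 < Rmin (Rabs t) (2 * PI - Rabs t)) by (apply Rmin_glb_lt; lra).
        exists (mkposreal _ Hd). intros s Hs.
        unfold ball in Hs; simpl in Hs. unfold AbsRing_ball, abs, minus, plus, opp in Hs; simpl in Hs.
        pose proof (Rmin_l (Rabs t) (2 * PI - Rabs t)).
        pose proof (Rmin_r (Rabs t) (2 * PI - Rabs t)).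
        apply (f_beta B HB).
        pose proof (Rabs_triang_inv t s). pose proof (Rabs_triang_inv s t).
        replace (t - s) with (- (s + - t)) in H4 by ring. rewrite Rabs_Ropp in H4.
        replace (s - t) with (s + - t) in H5 by ring.
        split; lra. }
      pose proof (is_derive_ext_loc _ _ _ _ Hloc D1) as D2.
      apply is_derive_unique in D2. pose proof (is_derive_unique _ _ _ (deriv_g t Ht0)) as D3.
      fold b in D2. etransitivity; [symmetry; exact D2|exact D3]. }
    rewrite Hd. rewrite (f_beta B HB) by exact Ht.
    pose proof (exp_ne1 t Ht0).
    field. exact H.
Qed.


Lemma sum_split (F : nat -> R) (m : nat) :
  sum_f_R0 F (2 * m + 2) = sum_f_R0 (fun j => F (2 * j)%nat) (S m) + sum_f_R0 (fun j => F (2 * j + 1)%nat) m.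
Proof.
  induction m.
  - simpl. ring.
  - replace (2 * S m + 2)%nat with (S (S (2 * m + 2))) by lia.
    rewrite !tech5, IHm. rewrite tech5.
    replace (S (S (2 * m + 2))) with (2 * S (S m))%nat by lia.
    replace (S (2 * m + 2)) with (2 * S m + 1)%nat by lia. ring.
Qed.

Definition gc (B : nat -> R) (j : nat) : R := (-4) ^ j * beta B (2 * j).

Lemma gc_rec (B : nat -> R) (HB : is_Bernoulli B) (m : nat) :
  INR (2 * m) * gc B m - gc B m + PS_mult (gc B) (gc B) m + e1 m = 0.
Proof.
  destruct m as [|m].
  - assert (E : e1 0 = 0) by reflexivity. rewrite E.
    unfold gc, PS_mult. simpl. rewrite (beta0 B HB). ring.
  - pose proof (beta_ode B HB (2 * m + 2)) as H.
    set (b := beta B) in *.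
    unfold PS_mult in H. rewrite sum_split in H.
    replace (PS_incr_1 b (2 * m + 2)) with (b (2 * m + 1)%nat) in H
      by (replace (2 * m + 2)%nat with (S (2 * m + 1)) by lia; reflexivity).
    assert (Hodd : sum_f_R0 (fun j => b (2 * j + 1)%nat * b (2 * m + 2 - (2 * j + 1))%nat) m
                   = if Nat.eqb m 0 then 1/4 else 0).
    { destruct m as [|m'].
      - simpl. unfold b. rewrite (beta1 B HB). field.
      - simpl Nat.eqb. apply sum_eq_R0. intros j Hj.
        destruct j as [|j].
        + replace (2 * S m' + 2 - (2 * 0 + 1))%nat with (2 * m' + 3)%nat by lia.
          unfold b. rewrite (beta_odd B HB). ring.
        + replace (2 * S j + 1)%nat with (2 * j + 3)%nat by lia.
          unfold b. rewrite (beta_odd B HB). ring. }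
    assert (Hb1 : b (2 * m + 1)%nat = if Nat.eqb m 0 then -1/2 else 0).
    { destruct m as [|m'].
      - simpl. unfold b. apply (beta1 B HB).
      - replace (2 * S m' + 1)%nat with (2 * m' + 3)%nat by lia. unfold b. apply (beta_odd B HB). }
    assert (Hev : PS_mult (gc B) (gc B) (S m) =
       (-4) ^ (S m) * sum_f_R0 (fun j => b (2 * j)%nat * b (2 * m + 2 - 2 * j)%nat) (S m)).
    { unfold PS_mult. rewrite scal_sum. apply sum_eq. intros i Hi.
      unfold gc. fold b.
      replace (2 * m + 2 - 2 * i)%nat with (2 * (S m - i))%nat by lia.
      replace ((-4) ^ (S m)) with ((-4) ^ i * (-4) ^ (S m - i)) by (rewrite <- pow_add; f_equal; lia).
      ring. }
    rewrite Hodd, Hb1 in H.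
    rewrite Hev.
    unfold gc. fold b.
    replace (2 * S m)%nat with (2 * m + 2)%nat by lia.
    assert (He1 : e1 (S m) = if Nat.eqb m 0 then 1 else 0) by (destruct m; reflexivity).
    rewrite He1.
    destruct (Nat.eqb m 0) eqn:Em.
    + apply Nat.eqb_eq in Em. subst m. simpl in H |- *. lra.
    + rewrite plus_INR, mult_INR in H |- *. simpl INR in H |- *.
      match type of H with ?L = 0 => transitivity ((-4) ^ (S m) * L); [ring| rewrite H; ring] end.
Qed.


Definition GRec (g : nat -> R) : Prop :=
  g 0%nat = 1 /\ forall m, INR (2 * m) * g m - g m + PS_mult g g m + e1 m = 0.

Lemma sum_nonneg (F : nat -> R) (N : nat) : (forall n, (n <= N)%nat -> 0 <= F n) -> 0 <= sum_f_R0 F N.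
Proof.
  intros H. rewrite <- (sum_eq_R0 (fun _ => 0) N) by auto.
  apply sum_Rle. auto.
Qed.

Lemma conv_split (g : nat -> R) (m : nat) : g 0%nat = 1 -> (2 <= m)%nat ->
  PS_mult g g m = 2 * g m + sum_f_R0 (fun k => g (S k) * g (m - S k)%nat) (m - 2).
Proof.
  intros H0 Hm. unfold PS_mult.
  rewrite decomp_sum by lia.
  replace (Init.Nat.pred m) with (S (m - 2)) by lia.
  rewrite tech5. replace (S (S (m - 2))) with m by lia.
  rewrite Nat.sub_0_r, Nat.sub_diag, H0. ring.
Qed.

Lemma g1 (g : nat -> R) : GRec g -> g 1%nat = - 1 / 3.
Proof.
  intros [H0 H]. specialize (H 1%nat). unfold PS_mult in H. simpl in H.
  rewrite H0 in H. unfold e1 in H; simpl in H. lra.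
Qed.

Lemma a_rec (g : nat -> R) (m : nat) : GRec g -> (2 <= m)%nat ->
  (2 * INR m + 1) * (- g m) = sum_f_R0 (fun k => (- g (S k)) * (- g (m - S k)%nat)) (m - 2).
Proof.
  intros [H0 H] Hm. specialize (H m). rewrite conv_split in H by auto.
  assert (E : e1 m = 0).
  { destruct m as [|[|m]]; [lia|lia|reflexivity]. }
  rewrite E, mult_INR in H. simpl INR in H.
  rewrite (sum_eq _ (fun k => g (S k) * g (m - S k)%nat)) by (intros; ring).
  lra.
Qed.

Lemma a_bounds (g : nat -> R) : GRec g ->
  forall m, (1 <= m)%nat ->
    (forall k, (1 <= k <= m)%nat -> 0 < - g k) /\
    (forall k, (1 <= k < m)%nat -> - g (S k) <= - g k / 6).
Proof.
  intros HG. pose proof (g1 g HG) as Hg1.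
  induction m as [|m IH]; intros Hm; [lia|].
  destruct (Nat.eq_dec m 0) as [->|Hm0].
  { split; intros k Hk; [replace k with 1%nat by lia; lra | lia]. }
  destruct (IH ltac:(lia)) as [Hpos Hrat].
  assert (Key : 0 < - g (S m) /\ - g (S m) <= - g m / 6).
  { destruct (Nat.eq_dec m 1) as [->|Hm1].
    - pose proof (a_rec g 2 HG ltac:(lia)) as R2. simpl in R2. rewrite Hg1 in R2.
      replace (2 * INR 2 + 1) with 5 in R2 by (simpl; ring).
      rewrite Hg1. lra.
    - pose proof (a_rec g (S m) HG ltac:(lia)) as Rm1.
      pose proof (a_rec g m HG ltac:(lia)) as Rm.
      rewrite decomp_sum in Rm1 by lia.
      replace (Init.Nat.pred (S m - 2)) with (m - 2)%nat in Rm1 by lia.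
      replace (S m - 1)%nat with m in Rm1 by lia.
      set (s := sum_f_R0 (fun i => - g (S (S i)) * - g (S m - S (S i))%nat) (m - 2)) in Rm1.
      set (s0 := sum_f_R0 (fun k => - g (S k) * - g (m - S k)%nat) (m - 2)) in Rm.
      assert (Hs : s <= s0 / 6).
      { unfold s, s0. unfold Rdiv. rewrite Rmult_comm, scal_sum. apply sum_Rle.
        intros i Hi. replace (S m - S (S i))%nat with (m - S i)%nat by lia.
        assert (0 < - g (m - S i)%nat) by (apply Hpos; lia).
        assert (- g (S (S i)) <= - g (S i) / 6) by (apply Hrat; lia).
        nra. }
      assert (Hs0 : 0 <= s).
      { unfold s. apply sum_nonneg. intros i Hi.
        replace (S m - S (S i))%nat with (m - S i)%nat by lia.
        assert (0 < - g (m - S i)%nat) by (apply Hpos; lia).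
        assert (0 < - g (S (S i))) by (apply Hpos; lia).
        nra. }
      assert (Ham : 0 < - g m) by (apply Hpos; lia).
      assert (HM : 0 < INR m) by (apply lt_0_INR; lia).
      rewrite S_INR in Rm1. rewrite Hg1 in Rm1.
      split.
      + apply Rmult_lt_reg_l with (2 * (INR m + 1) + 1); [lra|]. nra.
      + apply Rmult_le_reg_l with (2 * (INR m + 1) + 1); [lra|]. nra. }
  split.
  - intros k Hk. destruct (Nat.eq_dec k (S m)) as [->|Hk']; [tauto|apply Hpos; lia].
  - intros k Hk. destruct (Nat.eq_dec k m) as [->|Hk']; [tauto|apply Hrat; lia].
Qed.

Lemma a_pos (g : nat -> R) : GRec g -> forall k, (1 <= k)%nat -> 0 < - g k.
Proof. intros HG k Hk. apply (a_bounds g HG k Hk). lia. Qed.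

Lemma a_ratio (g : nat -> R) : GRec g -> forall k, (1 <= k)%nat -> - g (S k) <= - g k / 6.
Proof. intros HG k Hk. apply (a_bounds g HG (S k) ltac:(lia)). lia. Qed.

Lemma g_bound (g : nat -> R) : GRec g -> forall k, Rabs (g k) <= 2 * (/ 6) ^ k.
Proof.
  intros HG.
  assert (H : forall k, - g (S k) <= / 3 * (/ 6) ^ k).
  { induction k.
    - rewrite (g1 g HG). simpl. lra.
    - pose proof (a_ratio g HG (S k) ltac:(lia)). simpl. lra. }
  intros [|k].
  - rewrite (proj1 HG). simpl. rewrite Rabs_R1. lra.
  - rewrite Rabs_left by (pose proof (a_pos g HG (S k) ltac:(lia)); lra).
    specialize (H k). simpl. lra.
Qed.


Lemma ex_g (g : nat -> R) : GRec g -> forall y, Rabs y < 6 -> ex_pseries g y.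
Proof.
  intros HG y Hy. apply ex_pseries_R.
  apply ex_series_Rabs.
  apply (@ex_series_le R_AbsRing R_CompleteNormedModule _ (fun k => 2 * (Rabs y / 6) ^ k)).
  - intros n. unfold norm; simpl. unfold abs; simpl. rewrite Rabs_Rabsolu.
    rewrite Rabs_mult, <- RPow_abs.
    pose proof (g_bound g HG n).
    replace (Rabs y / 6) with (Rabs y * / 6) by reflexivity. rewrite Rpow_mult_distr.
    pose proof (pow_le (Rabs y) n (Rabs_pos y)).
    nra.
  - apply (ex_series_scal_l 2 (fun k => (Rabs y / 6) ^ k)). apply ex_series_geom.
    rewrite Rabs_pos_eq; [|pose proof (Rabs_pos y); lra]. lra.
Qed.

Lemma rad_g (g : nat -> R) : GRec g -> forall y, Rabs y < 6 -> Rbar_lt (Rabs y) (CV_radius g).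
Proof.
  intros HG. apply radius_ge. intros x Hx. apply ex_g; auto. rewrite Rabs_pos_eq; lra.
Qed.

Lemma G_ode (g : nat -> R) : GRec g -> forall y, Rabs y < 6 ->
  2 * y * PSeries (PS_derive g) y = PSeries g y - (PSeries g y) ^ 2 - y.
Proof.
  intros HG y Hy.
  assert (Hr := rad_g g HG y Hy).
  assert (Hc : forall n, PS_scal 2 (Dc g) n = PS_minus (PS_minus g (PS_mult g g)) e1 n).
  { intros n. destruct HG as [_ H]. specialize (H n).
    unfold PS_scal, PS_minus, Dc, scal, plus, opp; simpl. unfold mult, plus, opp; simpl.
    rewrite mult_INR in H. simpl INR in H. lra. }
  pose proof (PSeries_ext _ _ y Hc) as E.
  rewrite PSeries_scal, PS_Dc in E.
  rewrite PSeries_minus in E.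
  2: { apply ex_pseries_minus; [apply CV_radius_inside; auto| apply ex_pseries_mult; auto]. }
  2: apply ex_e1.
  rewrite PSeries_minus in E.
  2: apply CV_radius_inside; auto.
  2: apply ex_pseries_mult; auto.
  rewrite PSeries_mult in E by auto. rewrite PS_e1 in E.
  rewrite Rmult_assoc, E. ring.
Qed.

Lemma G_tail (g : nat -> R) : GRec g -> forall y, 0 <= y <= 4 ->
  1 - PSeries g y = y * PSeries (fun k => - g (S k)) y /\
  0 <= PSeries (fun k => - g (S k)) y <= 1.
Proof.
  intros HG y Hy.
  assert (Hex : ex_pseries g y) by (apply ex_g; auto; rewrite Rabs_pos_eq; lra).
  split.
  - rewrite PSeries_decr_1 by exact Hex. rewrite (proj1 HG).
    rewrite (PSeries_ext (fun k => - g (S k)) (PS_opp (PS_decr_1 g))) by (intros; reflexivity).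
    rewrite PSeries_opp. unfold PS_decr_1. ring.
  - assert (Hgeo : ex_series (fun k => / 3 * (y / 6) ^ k)).
    { apply (ex_series_scal_l (/3) (fun k => (y / 6) ^ k)). apply ex_series_geom.
      rewrite Rabs_pos_eq; lra. }
    assert (Hle : forall n, 0 <= - g (S n) * y ^ n <= / 3 * (y / 6) ^ n).
    { intros n. pose proof (a_pos g HG (S n) ltac:(lia)).
      pose proof (g_bound g HG (S n)). rewrite Rabs_left in H0 by lra.
      pose proof (pow_le y n ltac:(lra)).
      replace (y / 6) with (y * / 6) by reflexivity. rewrite Rpow_mult_distr.
      simpl in H0. pose proof (pow_le (/6) n ltac:(lra)). split; nra. }
    unfold PSeries. split.
    + apply Rle_trans with (Series (fun _ : nat => 0)).
      { right. rewrite (Series_ext (fun _ => 0) (fun n => 0 * 0)) by (intros; ring).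
        rewrite Series_scal_l. ring. }
      apply Series_le; [intros n; specialize (Hle n); lra|].
      apply ex_series_Rabs. apply (@ex_series_le R_AbsRing R_CompleteNormedModule _ (fun k => / 3 * (y / 6) ^ k)); auto.
      intros n; specialize (Hle n). unfold norm; simpl; unfold abs; simpl.
      rewrite Rabs_Rabsolu, Rabs_pos_eq; lra.
    + apply Rle_trans with (Series (fun k => / 3 * (y / 6) ^ k)).
      * apply Series_le; auto.
      * rewrite Series_scal_l.
        replace (Series (pow (y / 6))) with (/ (1 - y / 6))
          by (symmetry; apply is_series_unique, is_series_geom; rewrite Rabs_pos_eq; lra).
        apply Rmult_le_reg_l with (3 * (1 - y / 6)); [lra|].
        field_simplify; lra.
Qed.


Lemma dh (g : nat -> R) : GRec g -> forall x, Rabs x < 2 ->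
  is_derive (fun x => PSeries g (x ^ 2)) x (2 * x * PSeries (PS_derive g) (x ^ 2)).
Proof.
  intros HG x Hx.
  assert (Hx2 : Rabs (x ^ 2) < 6).
  { rewrite <- RPow_abs. pose proof (Rabs_pos x). simpl. nra. }
  assert (D1 := is_derive_PSeries g (x ^ 2) (rad_g g HG _ Hx2)).
  assert (D2 : is_derive (fun x : R => x ^ 2) x (2 * x)).
  { auto_derive; [exact I|ring]. }
  pose proof (is_derive_comp (PSeries g) (fun x => x ^ 2) x _ _ D1 D2) as D.
  exact D.
Qed.

Lemma W_zero (g : nat -> R) : GRec g -> forall x, 0 < x < PI / 2 ->
  PSeries g (x ^ 2) * sin x = x * cos x.
Proof.
  intros HG x Hx.
  assert (Hpi := PI_4).
  set (h := fun x => PSeries g (x ^ 2)).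
  set (Gd := fun c => PSeries (PS_derive g) (c ^ 2)).
  set (W := fun c => h c * sin c - c * cos c).
  set (Wd := fun c => 2 * c * Gd c * sin c + h c * cos c - cos c + c * sin c).
  set (V := fun c => (h c * sin c - c * cos c) ^ 2 * exp (-4 * c)).
  set (Vd := fun c => (2 * W c * Wd c - 4 * W c ^ 2) * exp (-4 * c)).
  assert (HD : forall c, 0 <= c <= x -> derivable_pt_lim V c (Vd c)).
  { intros c Hc. apply is_derive_Reals.
    assert (Hd := dh g HG c ltac:(rewrite Rabs_pos_eq; lra)).
    unfold V. auto_derive.
    - exists (2 * c * PSeries (PS_derive g) (c ^ 2)). exact Hd.
    - match goal with |- context [Derive ?f c] =>
        replace (Derive f c) with (2 * c * PSeries (PS_derive g) (c ^ 2))
        by (symmetry; apply is_derive_unique; exact Hd) end.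
      unfold Vd, W, Wd, Gd, h. ring. }
  destruct (MVT_cor2 V Vd 0 x ltac:(lra) HD) as [c [Hmvt Hc]].
  assert (HV0 : V 0 = 0).
  { unfold V. rewrite sin_0. simpl. ring. }
  assert (HVd : Vd c <= 0).
  { assert (Hc2 : Rabs (c ^ 2) < 6) by (rewrite Rabs_pos_eq; [simpl; nra|simpl; nra]).
    pose proof (G_ode g HG (c ^ 2) Hc2) as Ho.
    destruct (G_tail g HG (c ^ 2) ltac:(simpl; split; nra)) as [Ht1 Ht2].
    assert (E : c * Wd c = (1 - h c) * W c).
    { unfold Wd, W, Gd, h.
      replace (c * (2 * c * PSeries (PS_derive g) (c ^ 2) * sin c + PSeries g (c ^ 2) * cos c - cos c + c * sin c))
        with ((2 * c ^ 2 * PSeries (PS_derive g) (c ^ 2)) * sin c + c * PSeries g (c ^ 2) * cos c - c * cos c + c ^ 2 * sin c) by ring.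
      rewrite Ho. ring. }
    assert (E2 : c * Vd c = 2 * W c ^ 2 * (1 - h c - 2 * c) * exp (-4 * c)).
    { unfold Vd. replace (c * ((2 * W c * Wd c - 4 * W c ^ 2) * exp (-4 * c)))
        with ((2 * W c * (c * Wd c) - 4 * c * W c ^ 2) * exp (-4 * c)) by ring.
      rewrite E. ring. }
    assert (Hh : 1 - h c - 2 * c <= 0).
    { unfold h. rewrite Ht1. set (A := PSeries (fun k => - g (S k)) (c ^ 2)) in *.
      assert (c < 2) by lra.
      assert (c ^ 2 * A <= c ^ 2) by (pose proof (pow2_ge_0 c); nra).
      simpl in *. nra. }
    assert (0 <= W c ^ 2) by (apply pow2_ge_0).
    pose proof (exp_pos (-4 * c)).
    assert (c * Vd c <= 0).
    { rewrite E2. set (w := W c ^ 2) in *. set (d := 1 - h c - 2 * c) in *.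
      assert (w * d <= 0) by nra. nra. }
    nra. }
  assert (HVx : V x <= 0) by nra.
  assert (HVx' : 0 <= V x) by (unfold V; pose proof (exp_pos (-4 * x)); pose proof (pow2_ge_0 (h x * sin x - x * cos x)); nra).
  assert (E : V x = 0) by lra.
  unfold V in E. pose proof (exp_pos (-4 * x)).
  apply Rmult_integral in E. destruct E as [E|E]; [|lra].
  apply pow_eq_zero_or in E || idtac.
  assert (h x * sin x - x * cos x = 0).
  { apply Rsqr_0_uniq. unfold Rsqr. rewrite <- E. ring. }
  unfold h in H0. lra.
Qed.

Lemma factR (n : nat) : INR (fact (S n)) = INR (S n) * INR (fact n).
Proof. rewrite fact_simpl, mult_INR. reflexivity. Qed.
Lemma PI2_lt : PI / 2 < 8 / 5.
Proof.
  destruct (Rlt_or_le (PI / 2) (8/5)) as [H|H]; [exact H|exfalso].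
  assert (Hc : 0 <= cos (8/5)) by (apply cos_ge_0; pose proof PI_RGT_0; lra).
  destruct (pre_cos_bound (8/5) 0 ltac:(lra) ltac:(lra)) as [_ Hb].
  unfold cos_approx, cos_term in Hb. simpl sum_f_R0 in Hb. simpl Nat.mul in Hb.
  simpl in Hb. lra.
Qed.

Lemma trig3 (x : R) : 0 < x < PI / 2 -> 3 * x * cos x < (3 - x ^ 2) * sin x.
Proof.
  intros Hx. pose proof PI_4. pose proof PI2_lt.
  destruct (sin_bound x 1 ltac:(lra) ltac:(lra)) as [Hs _].
  destruct (cos_bound x 1 ltac:(lra) ltac:(lra)) as [_ Hc].
  unfold sin_approx, cos_approx in *. simpl sum_f_R0 in *.
  unfold sin_term, cos_term in *.
  simpl Nat.mul in *. simpl Nat.add in *. 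
  rewrite !factR in *. simpl fact in *. simpl INR in *.
  assert (x < 2) by lra.
  assert (Hy : 0 < x^2 < 64/25) by (simpl; nra).
  assert (E1 : (3 - x^2) * (x - x^3/6 + x^5/120 - x^7/5040) - 3 * x * (1 - x^2/2 + x^4/24 - x^6/720 + x^8/40320)
      = x * (x^2) ^ 2 * (1/15 - x^2 / 210 + (1/5040 - 1/13440) * (x^2) ^ 2)).
  { field. }
  assert (0 < x * (x^2) ^ 2 * (1/15 - x^2 / 210 + (1/5040 - 1/13440) * (x^2) ^ 2)).
  { apply Rmult_lt_0_compat; [apply Rmult_lt_0_compat; [lra| apply pow_lt; lra]|].
    pose proof (pow2_ge_0 (x^2)). lra. }
  assert (3 - x^2 > 0) by lra.
  assert (Hs' : x - x^3/6 + x^5/120 - x^7/5040 <= sin x) by (eapply Rle_trans; [|exact Hs]; right; field).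
  assert (Hc' : cos x <= 1 - x^2/2 + x^4/24 - x^6/720 + x^8/40320) by (eapply Rle_trans; [exact Hc|]; right; field).
  assert (3 * x * cos x <= 3 * x * (1 - x^2/2 + x^4/24 - x^6/720 + x^8/40320)) by nra.
  assert ((3 - x^2) * (x - x^3/6 + x^5/120 - x^7/5040) <= (3 - x^2) * sin x) by nra.
  lra.
Qed.

Lemma sin_le_x (x : R) : 0 <= x <= 1 -> sin x <= x.
Proof.
  intros Hx. pose proof PI2_3_2.
  destruct (sin_bound x 0 ltac:(lra) ltac:(lra)) as [_ Hs].
  unfold sin_approx, sin_term in Hs. simpl in Hs.
  assert (x ^ 5 <= x ^ 3).
  { replace (x ^ 5) with (x ^ 3 * (x * x)) by ring. pose proof (pow_le x 3 ltac:(lra)).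
    rewrite <- (Rmult_1_r (x ^ 3)) at 2. apply Rmult_le_compat_l; [lra|].
    assert (x * x <= x * 1) by (apply Rmult_le_compat_l; lra). lra. }
  pose proof (pow_le x 3 ltac:(lra)). simpl in *. lra.
Qed.

Lemma cos_ge_poly (x : R) : 0 <= x <= 1 -> 1 - x ^ 2 / 2 <= cos x.
Proof.
  intros Hx. pose proof PI2_3_2.
  destruct (cos_bound x 0 ltac:(lra) ltac:(lra)) as [Hc _].
  unfold cos_approx, cos_term in Hc. simpl in Hc. simpl. lra.
Qed.

Lemma tan_small (x : R) : 0 < x <= 1 -> tan x * (1 - x ^ 2 / 2) <= x.
Proof.
  intros Hx. pose proof (sin_le_x x ltac:(lra)). pose proof (cos_ge_poly x ltac:(lra)).
  assert (0 < 1 - x ^ 2 / 2) by (simpl; nra).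
  assert (Hs : 0 < sin x) by (apply sin_gt_0; pose proof PI2_3_2; lra).
  unfold tan. apply Rmult_le_reg_l with (cos x); [lra|].
  field_simplify; [|lra]. nra.
Qed.

Lemma tan_big (M : R) : 0 < M -> exists x, 1 <= x < PI / 2 /\ M <= tan x.
Proof.
  intros HM. pose proof PI2_3_2.
  set (d := Rmin (1/4) (1 / (2 * M))).
  assert (Hd1 : d <= 1/4) by apply Rmin_l.
  assert (Hd2 : d <= 1 / (2 * M)) by apply Rmin_r.
  assert (Hd0 : 0 < d) by (apply Rmin_glb_lt; [lra| apply Rdiv_lt_0_compat; lra]).
  exists (PI / 2 - d). split; [lra|].
  unfold tan. rewrite sin_shift, cos_shift.
  pose proof (sin_le_x d ltac:(lra)). pose proof (cos_ge_poly d ltac:(lra)).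
  assert (Hs : 0 < sin d) by (apply sin_gt_0; lra).
  assert (d * (2 * M) <= 1).
  { apply Rmult_le_reg_r with (/ (2 * M)). apply Rinv_0_lt_compat; lra.
    rewrite Rmult_assoc, Rinv_r, Rmult_1_r by lra. unfold Rdiv in Hd2. lra. }
  apply Rmult_le_reg_r with (sin d); [lra|].
  unfold Rdiv. rewrite Rmult_assoc, Rinv_l, Rmult_1_r by lra.
  simpl in *. nra.
Qed.


Lemma GRec_gc (B : nat -> R) (HB : is_Bernoulli B) : GRec (gc B).
Proof.
  split; [|apply gc_rec; auto]. unfold gc. simpl. rewrite (beta0 B HB). ring.
Qed.

Definition mseq (g : nat -> R) (k : nat) : R := 2 * g k - 2 * Dc g k.

Lemma ex_mseq (g : nat -> R) : GRec g -> forall y, Rabs y < 6 -> ex_pseries (mseq g) y.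
Proof.
  intros HG y Hy. assert (Hr := rad_g g HG y Hy).
  eapply ex_pseries_ext; [|apply (ex_pseries_minus (PS_scal 2 g) (PS_scal 2 (Dc g)))].
  - intros n. unfold mseq, PS_minus, PS_scal, scal, plus, opp; simpl. unfold mult, plus, opp; simpl. ring.
  - apply ex_pseries_scal; [apply Rmult_comm|apply CV_radius_inside, Hr].
  - apply ex_pseries_scal; [apply Rmult_comm|apply ex_Dc, Hr].
Qed.

Lemma PS_mseq (g : nat -> R) : GRec g -> forall y, Rabs y < 6 ->
  PSeries (mseq g) y = 2 * PSeries g y - 2 * (y * PSeries (PS_derive g) y).
Proof.
  intros HG y Hy. assert (Hr := rad_g g HG y Hy).
  rewrite (PSeries_ext _ (PS_minus (PS_scal 2 g) (PS_scal 2 (Dc g)))).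
  2: { intros n. unfold mseq, PS_minus, PS_scal, scal, plus, opp; simpl. unfold mult, plus, opp; simpl. ring. }
  rewrite PSeries_minus.
  - rewrite !PSeries_scal, PS_Dc. reflexivity.
  - apply ex_pseries_scal; [apply Rmult_comm|apply CV_radius_inside, Hr].
  - apply ex_pseries_scal; [apply Rmult_comm|apply ex_Dc, Hr].
Qed.

Lemma middle_series (g : nat -> R) : GRec g -> forall x, 0 < x < PI / 2 ->
  middle x = PSeries (mseq g) (x ^ 2) /\ 0 < PSeries g (x ^ 2) <= 1 /\
  middle x = x ^ 2 + (PSeries g (x ^ 2)) ^ 2 + PSeries g (x ^ 2).
Proof.
  intros HG x Hx. pose proof PI2_lt.
  assert (Hx2 : Rabs (x ^ 2) < 6) by (rewrite Rabs_pos_eq; simpl; nra).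
  pose proof (W_zero g HG x Hx) as HW.
  assert (Hs : 0 < sin x) by (apply sin_gt_0; lra).
  assert (Hc : 0 < cos x) by (apply cos_gt_0; lra).
  set (h := PSeries g (x ^ 2)) in *.
  assert (Hh : h = x * cos x / sin x) by (rewrite <- HW; field; lra).
  pose proof (G_ode g HG (x ^ 2) Hx2) as Ho. fold h in Ho.
  rewrite PS_mseq by auto. fold h.
  destruct (G_tail g HG (x ^ 2) ltac:(simpl; split; nra)) as [Ht1 Ht2].
  split.
  - unfold middle, tan.
    assert (E1 : x / (sin x / cos x) = h) by (rewrite Hh; field; lra).
    assert (E2 : (x / sin x) ^ 2 = x ^ 2 + h ^ 2).
    { rewrite Hh. pose proof (sin2_cos2 x). unfold Rsqr in H0.
      replace ((x / sin x) ^ 2) with (x ^ 2 * (sin x * sin x + cos x * cos x) / (sin x) ^ 2)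
        by (rewrite H0; field; lra).
      field. lra. }
    rewrite E1, E2. lra.
  - split; [split|].
    + rewrite Hh. apply Rdiv_lt_0_compat; [nra|lra].
    + assert (0 <= x ^ 2 * PSeries (fun k => - g (S k)) (x ^ 2)) by (apply Rmult_le_pos; [apply pow2_ge_0|lra]).
      unfold h; lra.
    + unfold middle, tan.
      assert (E1 : x / (sin x / cos x) = h) by (rewrite Hh; field; lra).
      assert (E2 : (x / sin x) ^ 2 = x ^ 2 + h ^ 2).
      { rewrite Hh. pose proof (sin2_cos2 x). unfold Rsqr in H0.
        replace ((x / sin x) ^ 2) with (x ^ 2 * (sin x * sin x + cos x * cos x) / (sin x) ^ 2)
          by (rewrite H0; field; lra).
        field. lra. }
      rewrite E1, E2. reflexivity.
Qed.

Lemma m_pos (g : nat -> R) : GRec g -> forall k, (2 <= k)%nat -> 0 < mseq g k.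
Proof.
  intros HG k Hk. unfold mseq, Dc. pose proof (a_pos g HG k ltac:(lia)).
  assert (2 <= INR k) by (replace 2 with (INR 2) by (simpl; ring); apply le_INR; lia).
  nra.
Qed.

Lemma m_ratio (g : nat -> R) : GRec g -> forall k, (2 <= k)%nat -> mseq g (S k) <= mseq g k / 3.
Proof.
  intros HG k Hk. unfold mseq, Dc. pose proof (a_pos g HG k ltac:(lia)).
  pose proof (a_ratio g HG k ltac:(lia)).
  assert (2 <= INR k) by (replace 2 with (INR 2) by (simpl; ring); apply le_INR; lia).
  rewrite S_INR. nra.
Qed.

Lemma m_geom (g : nat -> R) : GRec g -> forall n j, (2 <= n)%nat -> mseq g (n + j) <= mseq g n * (/ 3) ^ j.
Proof.
  intros HG n j Hn. induction j.
  - rewrite Nat.add_0_r. simpl. lra.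
  - replace (n + S j)%nat with (S (n + j)) by lia.
    pose proof (m_ratio g HG (n + j) ltac:(lia)). simpl. lra.
Qed.

Lemma tail_bounds (g : nat -> R) : GRec g -> forall n y, (2 <= n)%nat -> 0 <= y < 3 ->
  mseq g n <= PSeries (PS_decr_n (mseq g) n) y <= mseq g n / (1 - y / 3).
Proof.
  intros HG n y Hn Hy.
  assert (Hle : forall j, 0 <= mseq g (n + j) * y ^ j <= mseq g n * (y / 3) ^ j).
  { intros j. pose proof (m_pos g HG (n + j) ltac:(lia)). pose proof (m_geom g HG n j Hn).
    pose proof (pow_le y j ltac:(lra)).
    replace (y / 3) with (y * / 3) by reflexivity. rewrite Rpow_mult_distr.
    split; [nra|]. pose proof (pow_le (/3) j ltac:(lra)).
    replace (mseq g n * (y ^ j * (/ 3) ^ j)) with ((mseq g n * (/ 3) ^ j) * y ^ j) by ring.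
    apply Rmult_le_compat_r; lra. }
  assert (Hgeo : ex_series (fun j => mseq g n * (y / 3) ^ j)).
  { apply (ex_series_scal_l (mseq g n) (fun j => (y / 3) ^ j)). apply ex_series_geom.
    rewrite Rabs_pos_eq; lra. }
  assert (Hex : ex_series (fun j => mseq g (n + j) * y ^ j)).
  { apply ex_series_Rabs. apply (@ex_series_le R_AbsRing R_CompleteNormedModule _ (fun j => mseq g n * (y / 3) ^ j)); [|exact Hgeo].
    intros j; specialize (Hle j). unfold norm; simpl; unfold abs; simpl.
    rewrite Rabs_Rabsolu, Rabs_pos_eq; lra. }
  unfold PSeries, PS_decr_n. split.
  - rewrite Series_incr_1 by exact Hex. simpl. rewrite Nat.add_0_r.
    assert (0 <= Series (fun k => mseq g (n + S k) * (y * y ^ k))).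
    { apply Rle_trans with (Series (fun _ : nat => 0)).
      { right. rewrite (Series_ext (fun _ => 0) (fun n => 0 * 0)) by (intros; ring).
        rewrite Series_scal_l. ring. }
      apply Series_le.
      - intros k. specialize (Hle (S k)). simpl in Hle. lra.
      - apply ex_series_incr_1 in Hex. eapply ex_series_ext; [|exact Hex]. intros k. simpl. reflexivity. }
    lra.
  - apply Rle_trans with (Series (fun j => mseq g n * (y / 3) ^ j)).
    + apply Series_le; auto.
    + rewrite Series_scal_l.
      replace (Series (pow (y / 3))) with (/ (1 - y / 3))
        by (symmetry; apply is_series_unique, is_series_geom; rewrite Rabs_pos_eq; lra).
      right. field. lra.
Qed.


Lemma coef_m (B : nat -> R) (HB : is_Bernoulli B) (k : nat) : coef B k = mseq (gc B) (S k).
Proof.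
  unfold coef, mseq, Dc. rewrite S_INR.
  replace (2 * gc B (S k) - 2 * ((INR k + 1) * gc B (S k))) with (- 2 * INR k * gc B (S k)) by ring.
  destruct k as [|k].
  - change (INR 0) with 0. unfold Rdiv. ring.
  - pose proof (a_pos (gc B) (GRec_gc B HB) (S (S k)) ltac:(lia)) as Hp.
    replace (- 2 * INR (S k) * gc B (S (S k))) with (2 * INR (S k) * Rabs (gc B (S (S k))))
      by (rewrite Rabs_left by lra; ring).
    unfold gc, beta. rewrite Rabs_mult, Rabs_div, <- RPow_abs.
    2: apply INR_fact_neq_0.
    rewrite (Rabs_pos_eq (INR _)) by apply pos_INR.
    replace (Rabs (-4)) with (2 ^ 2) by (rewrite Rabs_left by lra; simpl; ring).
    rewrite <- pow_mult.
    assert (E : 2 ^ (2 * S k + 3) = 2 * 2 ^ (2 * S (S k)))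
      by (replace (2 * S k + 3)%nat with (S (2 * S (S k))) by lia; reflexivity).
    rewrite E. replace (2 * S (S k))%nat with (2 * S k + 2)%nat by lia.
    field. apply INR_fact_neq_0.
Qed.

Lemma sum_part (B : nat -> R) (HB : is_Bernoulli B) (n : nat) (x : R) :
  sum_f_R0 (fun k => mseq (gc B) k * (x ^ 2) ^ k) (S n) =
  2 + sumR (fun j => coef B (S j) * x ^ (2 * S j + 2)) n.
Proof.
  induction n.
  - simpl. unfold mseq, Dc. simpl. unfold gc. simpl. rewrite (beta0 B HB).
    simpl. ring.
  - rewrite tech5, IHn.
    change (sumR ?F (S n)) with (sumR F n + F n). cbv beta. rewrite coef_m by auto.
    rewrite <- pow_mult. replace (2 * S (S n))%nat with (2 * S n + 2)%nat by lia. ring.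
Qed.

Lemma sumR_nonneg (F : nat -> R) (n : nat) : (forall j, 0 <= F j) -> 0 <= sumR F n.
Proof. intros H. induction n; simpl; [lra|]. specialize (H n). lra. Qed.

Lemma decomp (B : nat -> R) (HB : is_Bernoulli B) (N : nat) (HN : (1 <= N)%nat) (x : R) :
  0 < x < PI / 2 ->
  middle x = approx8 B N 0 x + x ^ (2 * N + 1) * x * PSeries (PS_decr_n (mseq (gc B)) (S N)) (x ^ 2).
Proof.
  intros Hx. pose proof PI2_lt.
  destruct (middle_series (gc B) (GRec_gc B HB) x Hx) as [E _].
  rewrite E. rewrite PSeries_decr_n with (n := N).
  2: { apply ex_mseq; [apply GRec_gc; auto|]. rewrite Rabs_pos_eq; simpl; nra. }
  unfold approx8. destruct N as [|n]; [lia|].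
  rewrite sum_part by auto. replace (S n - 1)%nat with n by lia.
  rewrite <- pow_mult. replace (2 * S (S n))%nat with (S (2 * S n + 1)) by lia.
  rewrite <- tech_pow_Rmult. ring.
Qed.

Theorem theorem8 (B : nat -> R) (HB : is_Bernoulli B) (N : nat) (HN : (1 <= N)%nat) :
  (forall x : R, 0 < x < PI / 2 ->
     approx8 B N 0 x < middle x /\ middle x < approx8 B N (coef B N) x)
  /\ (forall p : R, (forall x : R, 0 < x < PI / 2 -> approx8 B N p x < middle x) -> p <= 0)
  /\ (forall q : R, (forall x : R, 0 < x < PI / 2 -> middle x < approx8 B N q x) -> coef B N <= q).
Proof.
  pose proof PI2_lt as Hpi. pose proof PI2_3_2 as Hpi2.
  set (g := gc B). assert (HG : GRec g) by (apply GRec_gc; auto).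
  set (m := mseq g (S N)).
  assert (Hm : 0 < m) by (apply m_pos; auto; lia).
  assert (Hcoef : coef B N = m) by (unfold m, g; apply coef_m; auto).
  assert (Happ : forall c x, approx8 B N c x = approx8 B N 0 x + c * x ^ (2 * N + 1) * tan x).
  { intros c x. unfold approx8. ring. }
  assert (Htail : forall x, 0 < x < PI / 2 ->
     m <= PSeries (PS_decr_n (mseq g) (S N)) (x ^ 2) <= m / (1 - x ^ 2 / 3)).
  { intros x Hx. apply tail_bounds; auto; [lia|]. simpl; nra. }
  assert (Htan : forall x, 0 < x < PI / 2 -> 0 < tan x).
  { intros x Hx. unfold tan. apply Rdiv_lt_0_compat; [apply sin_gt_0|apply cos_gt_0]; lra. }
  split; [|split].
  - intros x Hx. rewrite (decomp B HB N HN x Hx).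
    specialize (Htail x Hx). fold g in Htail |- *.
    set (T := PSeries (PS_decr_n (mseq g) (S N)) (x ^ 2)) in *.
    assert (Hp : 0 < x ^ (2 * N + 1)) by (apply pow_lt; lra).
    split.
    + assert (0 < x ^ (2 * N + 1) * x * T) by (apply Rmult_lt_0_compat; [apply Rmult_lt_0_compat|]; lra).
      lra.
    + rewrite (Happ (coef B N) x), Hcoef.
      assert (x * T < m * tan x).
      { pose proof (trig3 x Hx) as H3.
        assert (Hs : 0 < sin x) by (apply sin_gt_0; lra).
        assert (Hc : 0 < cos x) by (apply cos_gt_0; lra).
        assert (Hy : 0 < 1 - x ^ 2 / 3) by (simpl; nra).
        assert (x * T <= x * (m / (1 - x ^ 2 / 3))) by (apply Rmult_le_compat_l; lra).
        assert (x / (1 - x ^ 2 / 3) < tan x).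
        { unfold tan. apply Rmult_lt_reg_r with (cos x * (1 - x^2/3)); [nra|].
          field_simplify; [|lra|lra]. simpl in *. lra. }
        assert (x * (m / (1 - x ^ 2 / 3)) = m * (x / (1 - x ^ 2 / 3))) by (field; lra).
        nra. }
      assert (x ^ (2 * N + 1) * (x * T) < x ^ (2 * N + 1) * (m * tan x)) by (apply Rmult_lt_compat_l; auto).
      nra.
  - intros p Hp. destruct (Rle_or_lt p 0) as [|Hp0]; [auto|exfalso].
    destruct (tan_big (6 / p) ltac:(apply Rdiv_lt_0_compat; lra)) as [x [Hx Ht]].
    assert (Hx' : 0 < x < PI / 2) by lra.
    specialize (Hp x Hx').
    destruct (middle_series g HG x Hx') as [_ [Hh Hmid]].
    assert (Hmid' : middle x < 6).
    { rewrite Hmid. simpl in *. nra. }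
    rewrite Happ in Hp.
    assert (Hs : 0 <= sumR (fun j => coef B (S j) * x ^ (2 * S j + 2)) (N - 1)).
    { apply sumR_nonneg. intros j. rewrite coef_m by auto.
      apply Rmult_le_pos; [left; apply m_pos; auto; lia|apply pow_le; lra]. }
    assert (Hpw : 1 <= x ^ (2 * N + 1)) by (apply pow_R1_Rle; lra).
    assert (p * (6 / p) = 6) by (field; lra).
    assert (6 <= p * x ^ (2 * N + 1) * tan x).
    { assert (p * tan x >= 6) by nra. nra. }
    unfold approx8 in Hp. lra.
  - intros q Hq. rewrite Hcoef. destruct (Rle_or_lt m q) as [|Hq0]; [auto|exfalso].
    set (x := Rmin (1/2) (1 - q / m) ).
    assert (Hq1 : 0 < 1 - q / m).
    { assert (q / m < 1) by (apply (Rmult_lt_reg_r m); [lra|]; unfold Rdiv; rewrite Rmult_assoc, Rinv_l; lra). lra. }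
    assert (Hx0 : 0 < x) by (apply Rmin_glb_lt; lra).
    assert (Hx1 : x <= 1/2) by apply Rmin_l.
    assert (Hx2 : x <= 1 - q / m) by apply Rmin_r.
    assert (Hx : 0 < x < PI / 2) by lra.
    specialize (Hq x Hx). rewrite (decomp B HB N HN x Hx), (Happ q x) in Hq.
    specialize (Htail x Hx). fold g in Htail, Hq.
    set (T := PSeries (PS_decr_n (mseq g) (S N)) (x ^ 2)) in *.
    assert (Hp : 0 < x ^ (2 * N + 1)) by (apply pow_lt; lra).
    assert (Ht := Htan x Hx).
    assert (q * tan x <= x * T).
    { destruct (Rle_or_lt q 0) as [Hqn|Hqp].
      - assert (q * tan x <= 0) by nra. assert (0 < x * T) by nra. lra.
      - pose proof (tan_small x ltac:(lra)) as Hts.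
        assert (Hxx : x ^ 2 <= x) by (simpl; nra).
        assert (H1 : q <= m * (1 - x ^ 2 / 2)).
        { assert (q = m * (q / m)) by (field; lra). nra. }
        assert (q * tan x <= m * (1 - x ^ 2 / 2) * tan x) by nra.
        assert (m * (1 - x ^ 2 / 2) * tan x <= m * x) by nra.
        nra. }
    assert (q * x ^ (2 * N + 1) * tan x <= x ^ (2 * N + 1) * x * T) by nra.
    lra.
Qed.
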